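(* Let $\mathcal{H}$ be a finite-dimensional Hilbert space, let $P, Q$ be orthogonal projectors on $\mathcal{H}$, and define $$f(P,Q) := \min_{\tilde P \in \mathrm{Proj}(\mathcal{H})}\|PQP - \tilde P\|.$$ Then $\|[P,Q]\| = \sqrt{f(P,Q) - f(P,Q)^2}$.
   Context: $\mathrm{Proj}(\mathcal{H})$ is the set of orthogonal projectors on $\mathcal{H}$, $\|\cdot\|$ the operator norm, $[P,Q] = PQ - QP$. *)

(* Defs.v *)
From mathcomp Require Import all_boot all_order all_algebra.
From mathcomp Require Import classical_sets reals.
From mathcomp.real_closed Require Import complex.
Set Implicit Arguments. Unset Strict Implicit. Unset Printing Implicit Defensive.
Import Order.TTheory GRing.Theory Num.Theory.
Local Open Scope ring_scope.
Local Open Scope classical_set_scope.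

Section Defs.
Variable R : realType.
Variable n : nat.

Definition vnorm (v : 'cV[R[i]]_n) : R :=
  Num.sqrt (\sum_(i < n) ((complex.Re (v i 0)) ^+ 2 + (complex.Im (v i 0)) ^+ 2)).

Definition opnorm (A : 'M[R[i]]_n) : R :=
  sup [set vnorm (A *m v) | v in [set v : 'cV[R[i]]_n | vnorm v <= 1]].

Definition adjoint (A : 'M[R[i]]_n) : 'M[R[i]]_n := (map_mx (@conjc R) A)^T.

Definition is_proj (P : 'M[R[i]]_n) : Prop := P *m P = P /\ adjoint P = P.

Definition commutator (P Q : 'M[R[i]]_n) : 'M[R[i]]_n := P *m Q - Q *m P.

(* f(P,Q) = min over orthogonal projectors Pt of ||PQP - Pt||
   (the minimum is attained by compactness, so it equals the infimum) *)
Definition fPQ (P Q : 'M[R[i]]_n) : R :=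
  inf [set opnorm (P *m Q *m P - Pt) | Pt in [set Pt | is_proj Pt]].
End Defs.

(* Main.v *)
Require Import Defs.
From mathcomp Require Import all_boot all_order all_algebra.
From mathcomp Require Import classical_sets reals.
From mathcomp.real_closed Require Import complex.
From mathcomp Require Import ring lra.
Set Implicit Arguments. Unset Strict Implicit. Unset Printing Implicit Defensive.
Import Order.TTheory GRing.Theory Num.Theory.
Local Open Scope ring_scope.
Local Open Scope complex_scope.

Section Hilb.
Variable R : realType.
Local Notation C := R[i].

Definition ad m p (A : 'M[C]_(m,p)) : 'M[C]_(p,m) := (map_mx conjc A)^T.

Lemma ad_mul m p q (A : 'M[C]_(m,p)) (B : 'M[C]_(p,q)) : ad (A *m B) = ad B *m ad A.
Proof. by rewrite /ad map_mxM trmx_mul. Qed.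

Lemma ad_ad m p (A : 'M[C]_(m,p)) : ad (ad A) = A.
Proof.
rewrite /ad map_trmx trmxK -map_mx_comp; apply: map_mx_id => x /=; exact: conjcK.
Qed.

Lemma adD m p (A B : 'M[C]_(m,p)) : ad (A + B) = ad A + ad B.
Proof. by rewrite /ad map_mxD linearD. Qed.

Lemma adB m p (A B : 'M[C]_(m,p)) : ad (A - B) = ad A - ad B.
Proof. by rewrite /ad map_mxB linearB. Qed.

Lemma ad1 m : ad (1%:M : 'M[C]_m) = 1%:M.
Proof. by rewrite /ad map_mx1 trmx1. Qed.

Lemma adZ m p (c : R) (A : 'M[C]_(m,p)) : ad (c%:C *: A) = c%:C *: ad A.
Proof. by rewrite /ad map_mxZ linearZ /= oppr0. Qed.

Lemma ad_entry m p (A : 'M[C]_(m,p)) i j : ad A j i = conjc (A i j).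
Proof. by rewrite /ad !mxE. Qed.

Variable n : nat.
Implicit Types (u v w : 'cV[C]_n).

Definition dot u v : C := (ad u *m v) 0 0.
Definition sqj (w : 'cV[C]_n) j : R := (complex.Re (w j 0)) ^+ 2 + (complex.Im (w j 0)) ^+ 2.
Definition nsq v : R := \sum_j sqj v j.

Lemma sqjE w j : (sqj w j)%:C = conjc (w j 0) * w j 0.
Proof. by rewrite /sqj add_Re2_Im2 sqr_normc mulrC. Qed.

Lemma dotE u v : dot u v = \sum_j conjc (u j 0) * v j 0.
Proof. by rewrite /dot mxE; apply: eq_bigr => j _; rewrite ad_entry. Qed.

Lemma nsqE v : (nsq v)%:C = dot v v.
Proof. rewrite dotE /nsq rmorph_sum; apply: eq_bigr => j _; exact: sqjE. Qed.

Lemma sqj_ge0 w j : 0 <= sqj w j.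
Proof. by rewrite /sqj addr_ge0 // sqr_ge0. Qed.

Lemma nsq_ge0 v : 0 <= nsq v.
Proof. by apply: sumr_ge0 => j _; apply: sqj_ge0. Qed.

Lemma vnormE v : vnorm v = Num.sqrt (nsq v).
Proof. by []. Qed.

Lemma nsq_eq0 v : nsq v = 0 -> v = 0.
Proof.
move=> h; apply/matrixP => j k; rewrite ord1 mxE.
have := psumr_eq0P (fun j _ => sqj_ge0 v j) h (erefl true : true) (i:=j).
move=> hj; move: (hj); rewrite /sqj => /eqP; rewrite paddr_eq0 ?sqr_ge0 //.
rewrite !sqrf_eq0 => /andP [/eqP h1 /eqP h2].
by rewrite [v j 0]complexE h1 h2 mulr0 addr0.
Qed.

Lemma dot_mul u v (A : 'M[C]_n) : dot u (A *m v) = dot (ad A *m u) v.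
Proof. by rewrite /dot ad_mul ad_ad mulmxA. Qed.

Lemma dot_mul' u v (A : 'M[C]_n) : dot (A *m u) v = dot u (ad A *m v).
Proof. by rewrite dot_mul ad_ad. Qed.

Lemma dotC u v : dot v u = conjc (dot u v).
Proof.
rewrite /dot; have := ad_entry (ad u *m v) 0 0; rewrite ad_mul ad_ad => <-; by [].
Qed.

Lemma dotDr u v w : dot u (v + w) = dot u v + dot u w.
Proof. by rewrite /dot mulmxDr mxE. Qed.
Lemma dotBr u v w : dot u (v - w) = dot u v - dot u w.
Proof. by rewrite /dot mulmxBr !mxE. Qed.
Lemma dotDl u v w : dot (v + w) u = dot v u + dot w u.
Proof. by rewrite /dot adD mulmxDl mxE. Qed.
Lemma dotBl u v w : dot (v - w) u = dot v u - dot w u.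
Proof. by rewrite /dot adB mulmxBl !mxE. Qed.
Lemma dotZr u v (a : C) : dot u (a *: v) = a * dot u v.
Proof. by rewrite /dot -scalemxAr mxE. Qed.
Lemma dotZl u v (c : R) : dot (c%:C *: u) v = c%:C * dot u v.
Proof. by rewrite /dot adZ -scalemxAl mxE. Qed.
Lemma dot0r u : dot u 0 = 0.
Proof. by rewrite /dot mulmx0 mxE. Qed.

Lemma nsqB_real u v (r : R) : dot u v = r%:C ->
  nsq (u - v) = nsq u + nsq v - 2 * r.
Proof.
move=> h; apply: complexI; rewrite nsqE dotBl !dotBr -!nsqE.
rewrite (dotC u v) h conjc_real !rmorphB rmorphD rmorphM /= .
by rewrite [(2 : R)%:C]rmorph_nat; ring.
Qed.

Lemma nsqD_real u v (r : R) : dot u v = r%:C ->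
  nsq (u + v) = nsq u + nsq v + 2 * r.
Proof.
move=> h; apply: complexI; rewrite nsqE dotDl !dotDr -!nsqE.
rewrite (dotC u v) h conjc_real !rmorphD rmorphM /= .
by rewrite [(2 : R)%:C]rmorph_nat; ring.
Qed.

Lemma nsqZ u (c : R) : nsq (c%:C *: u) = c ^+ 2 * nsq u.
Proof.
apply: complexI; rewrite nsqE dotZl dotZr -nsqE rmorphM rmorphXn /=.
by ring.
Qed.

Lemma nsqN u : nsq (- u) = nsq u.
Proof.
rewrite -scaleN1r -(rmorphN1 (real_complex R)) nsqZ.
by rewrite sqrrN expr1n mul1r.
Qed.

End Hilb.
Section Proj.
Variable R : realType.
Local Notation C := R[i].
Variable n : nat.
Implicit Types (u v w : 'cV[C]_n).

Definition isp (P : 'M[C]_n) := P *m P = P /\ ad P = P.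

Lemma ispC P : isp P -> isp (1%:M - P).
Proof.
move=> [h1 h2]; split.
  by rewrite mulmxBl mul1mx mulmxBr mulmx1 h1 subrr subr0.
by rewrite adB ad1 h2.
Qed.

Lemma isp_orth P : isp P -> P *m (1%:M - P) = 0.
Proof. by move=> [h1 _]; rewrite mulmxBr mulmx1 h1 subrr. Qed.

Lemma isp_orth' P : isp P -> (1%:M - P) *m P = 0.
Proof. by move=> [h1 _]; rewrite mulmxBl mul1mx h1 subrr. Qed.

Lemma isp_dec P v : isp P -> nsq v = nsq (P *m v) + nsq ((1%:M - P) *m v).
Proof.
move=> hP.
have -> : v = P *m v + (1%:M - P) *m v.
  by rewrite -mulmxDl addrC subrK mul1mx.
have e : P *m (P *m v + (1%:M - P) *m v) = P *m v.
  by rewrite mulmxDr !mulmxA (isp_orth hP) mul0mx addr0 hP.1.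
have e' : (1%:M - P) *m (P *m v + (1%:M - P) *m v) = (1%:M - P) *m v.
  by rewrite mulmxDr !mulmxA (isp_orth' hP) (ispC hP).1 mul0mx add0r.
rewrite e e' (nsqD_real (r := 0)) ?mulr0 ?addr0 //.
by rewrite dot_mul (ispC hP).2 mulmxA (isp_orth' hP) mul0mx dotC dot0r conjc0.
Qed.

Lemma isp_le P v : isp P -> nsq (P *m v) <= nsq v.
Proof. by move=> hP; rewrite (isp_dec v hP) lerDl nsq_ge0. Qed.

Lemma isp_lec P v : isp P -> nsq ((1%:M - P) *m v) <= nsq v.
Proof. by move=> hP; rewrite (isp_dec v hP) lerDr nsq_ge0. Qed.

Lemma nsq_par u v : nsq (u - v) <= 2 * nsq u + 2 * nsq v.
Proof.
set r := complex.Re (dot u v).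
have h1 : nsq (u - v) + nsq (u + v) = 2 * nsq u + 2 * nsq v.
  apply: complexI; rewrite !rmorphD !rmorphM /= !nsqE dotBl !dotBr dotDl !dotDr.
  by rewrite [(2 : R)%:C]rmorph_nat; ring.
by rewrite -h1 lerDl nsq_ge0.
Qed.

End Proj.
Section Diag.
Variable R : realType.
Local Notation C := R[i].
Variable n : nat.
Variable U : 'M[C]_n.
Hypothesis hU1 : U *m ad U = 1%:M.
Hypothesis hU2 : ad U *m U = 1%:M.

Definition rw (c : 'I_n -> R) : 'rV[C]_n := \row_j (c j)%:C.
Definition dg (c : 'I_n -> R) : 'M[C]_n := ad U *m diag_mx (rw c) *m U.

Lemma dg_mul c d : dg c *m dg d = dg (fun j => c j * d j).
Proof.
rewrite /dg !mulmxA -[ad U *m _ *m U *m ad U]mulmxA hU1 mulmx1.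
rewrite -[ad U *m _ *m _]mulmxA mulmx_diag; congr (_ *m diag_mx _ *m _).
by apply/rowP => j; rewrite !mxE rmorphM.
Qed.

Lemma ad_diag (c : 'I_n -> R) : ad (diag_mx (rw c)) = diag_mx (rw c).
Proof.
apply/matrixP => i j; rewrite ad_entry !mxE.
case: eqVneq => [->|_]; first by rewrite /= !mulr1n oppr0.
by rewrite /= !mulr0n oppr0.
Qed.

Lemma dg_ad c : ad (dg c) = dg c.
Proof. by rewrite /dg !ad_mul ad_ad ad_diag mulmxA. Qed.

Lemma dgB c d : dg c - dg d = dg (fun j => c j - d j).
Proof.
rewrite /dg -mulmxBl -mulmxBr; congr (_ *m _ *m _).
apply/matrixP => i j; rewrite !mxE; case: eqVneq => _; last by rewrite !mulr0n subr0.
by rewrite !mulr1n rmorphB.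
Qed.

Lemma nsqU z : nsq (U *m z) = nsq z.
Proof. by apply: complexI; rewrite !nsqE dot_mul mulmxA hU2 mul1mx. Qed.

Lemma quad c z : dot z (dg c *m z) = (\sum_j c j * sqj (U *m z) j)%:C.
Proof.
rewrite /dg -!mulmxA dot_mul ad_ad dotE rmorph_sum; apply: eq_bigr => j _.
rewrite mul_diag_mx [X in _ * X]mxE [rw c 0 j]mxE rmorphM /= sqjE.
by rewrite mulrCA.
Qed.

Lemma quad_le c K (w : 'cV[C]_n) : (forall j, c j <= K) ->
  \sum_j c j * sqj w j <= K * nsq w.
Proof.
move=> h; rewrite /nsq mulr_sumr; apply: ler_sum => j _.
by rewrite ler_wpM2r ?sqj_ge0.
Qed.

Definition ev (j : 'I_n) : 'cV[C]_n := ad U *m delta_mx j 0.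

Lemma ad_delta m p (i : 'I_m) (j : 'I_p) : ad (delta_mx i j : 'M[C]_(m,p)) = delta_mx j i.
Proof.
apply/matrixP => a b; rewrite ad_entry !mxE.
case: (a == j); case: (b == i); by rewrite /= ?oppr0.
Qed.

Lemma dgC_ev (d : 'rV[C]_n) j : (ad U *m diag_mx d *m U) *m ev j = d 0 j *: ev j.
Proof.
rewrite /ev !mulmxA -[ad U *m _ *m U *m ad U]mulmxA hU1 mulmx1.
rewrite -!mulmxA.
have -> : diag_mx d *m (delta_mx j 0 : 'cV[C]_n) = d 0 j *: (delta_mx j 0 : 'cV[C]_n).
  apply/matrixP => a b; rewrite mul_diag_mx !mxE.
  case: eqVneq => [->|]; last by rewrite /= !mulr0.
  by [].
by rewrite scalemxAr.
Qed.

Lemma dg_ev c j : dg c *m ev j = (c j)%:C *: ev j.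
Proof. by rewrite /dg dgC_ev mxE. Qed.

Lemma nsq_ev j : nsq (ev j) = 1.
Proof.
apply: complexI; rewrite nsqE /ev dot_mul ad_ad mulmxA hU1 mul1mx.
by rewrite /dot ad_delta mul_delta_mx mxE !eqxx.
Qed.

End Diag.
Section Norms.
Variable R : realType.
Local Notation C := R[i].
Variable n : nat.
Local Open Scope classical_set_scope.

Lemma sqrt_le (a c : R) : 0 <= c -> a <= c ^+ 2 -> Num.sqrt a <= c.
Proof.
move=> c0 h; rewrite -(ger0_norm c0) -sqrtr_sqr ler_sqrt //; exact: sqr_ge0.
Qed.

Lemma sqrt_ge (a c : R) : 0 <= c -> c ^+ 2 <= a -> c <= Num.sqrt a.
Proof.
move=> c0 h; rewrite -(ger0_norm c0) -sqrtr_sqr ler_sqrt //.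
exact: le_trans (sqr_ge0 c) h.
Qed.

Lemma vnorm_le1 (v : 'cV[C]_n) : (vnorm v <= 1) = (nsq v <= 1).
Proof. by rewrite vnormE -[X in _ <= X]sqrtr1 ler_sqrt. Qed.

Lemma nsq0 : nsq (0 : 'cV[C]_n) = 0.
Proof. by rewrite /nsq big1 // => j _; rewrite /sqj mxE /= expr0n /= addr0. Qed.

Lemma opnorm_le (B : 'M[C]_n) (c : R) : 0 <= c ->
  (forall v, nsq v <= 1 -> nsq (B *m v) <= c ^+ 2) -> opnorm B <= c.
Proof.
move=> c0 h; rewrite /opnorm; apply: ge_sup.
  exists (vnorm (B *m 0)); exists 0 => //=.
  by rewrite vnorm_le1 nsq0 ler01.
by move=> _ [v /= hv <-]; rewrite vnormE sqrt_le // h // -vnorm_le1.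
Qed.

Lemma opnorm_ge (B : 'M[C]_n) (K : R) : 0 <= K ->
  (forall v, nsq v <= 1 -> nsq (B *m v) <= K ^+ 2) ->
  forall v, nsq v <= 1 -> vnorm (B *m v) <= opnorm B.
Proof.
move=> K0 h v hv; rewrite /opnorm.
set E := [set _ | _ in _].
have hE : has_ubound E.
  by exists K => _ [w /= hw <-]; rewrite vnormE sqrt_le // h // -vnorm_le1.
apply: (ub_le_sup hE).
by exists v => //=; rewrite vnorm_le1.
Qed.

Lemma opnorm_eq (B : 'M[C]_n) (c K : R) : 0 <= c -> 0 <= K ->
  (forall v, nsq v <= 1 -> nsq (B *m v) <= K ^+ 2) ->
  (forall v, nsq v <= 1 -> nsq (B *m v) <= c ^+ 2) ->
  (exists v, nsq v <= 1 /\ c ^+ 2 <= nsq (B *m v)) -> opnorm B = c.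
Proof.
move=> c0 K0 hK hc [v [hv1 hv2]]; apply/le_anti; rewrite opnorm_le //=.
apply: le_trans (opnorm_ge K0 hK hv1); rewrite vnormE; exact: sqrt_ge.
Qed.

End Norms.

Lemma final (R : realType) n (Cm Am : 'M[R[i]]_n) (M g0 : R) :
 0 <= g0 -> g0 - g0 ^+ 2 = M ->
 (forall v, nsq v <= 1 -> nsq (Cm *m v) <= M) ->
 (exists v, nsq v <= 1 /\ M <= nsq (Cm *m v)) ->
 (forall Pt, isp Pt -> exists v, nsq v <= 1 /\ g0 ^+ 2 <= nsq ((Am - Pt) *m v)) ->
 (forall Pt, isp Pt -> forall v, nsq v <= 1 -> nsq ((Am - Pt) *m v) <= 2 ^+ 2) ->
 (exists Pt, isp Pt /\ forall v, nsq v <= 1 -> nsq ((Am - Pt) *m v) <= g0 ^+ 2) ->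
 opnorm Cm = Num.sqrt M /\
 inf [set opnorm (Am - Pt) | Pt in [set Pt | is_proj Pt]]%classic = g0.
Proof.
move=> g00 hM hC1 [v0 [hv0 hv0']] hb hbd [Pt0 [hPt0 hPt0']].
have M0 : 0 <= M by apply: le_trans (nsq_ge0 (Cm *m 0)) (hC1 0 _); rewrite nsq0 ler01.
split.
  apply: (opnorm_eq (K := Num.sqrt M)); rewrite ?sqrtr_ge0 ?sqr_sqrtr //.
  by exists v0.
have Eq : forall Pt, isp Pt -> g0 <= opnorm (Am - Pt).
  move=> Pt hPt; have [v [hv hv']] := hb Pt hPt.
  have K2 : (0:R) <= 2 by rewrite ler0n.
  apply: le_trans (_ : g0 <= vnorm ((Am - Pt) *m v)) (opnorm_ge K2 (hbd Pt hPt) hv).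
  by rewrite vnormE sqrt_ge.
have E0 : opnorm (Am - Pt0) = g0.
  apply/le_anti; rewrite Eq // andbT; exact: opnorm_le.
apply/le_anti; apply/andP; split.
  apply: ge_inf.
    exists g0 => _ [Pt /= hPt <-]; exact: Eq.
  by exists Pt0.
apply: lb_le_inf; first by exists g0, Pt0.
by move=> _ [Pt /= hPt <-]; apply: Eq.
Qed.



Definition gg (R : realType) (a : R) := if 1 <= 2 * a then 1 - a else a.
Definition ee (R : realType) (a : R) : R := if 1 <= 2 * a then 1 else 0.

Lemma AR1 (R : realType) (a b : R) : 0 <= a <= 1 -> 0 <= b <= 1 ->
  b - b * b <= a - a * a -> (b - ee b) * (b - ee b) <= gg a ^+ 2.
Proof.
move=> /andP[a0 a1] /andP[b0 b1] h; rewrite /gg /ee.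
case: (lerP 1 (2 * a)) => ha; case: (lerP 1 (2 * b)) => hb.
- case: (lerP a b) => ab; first nra.
  nra.
- nra.
- nra.
- case: (lerP b a) => ab; first nra.
  nra.
Qed.

Lemma AR2 (R : realType) (a p q : R) : 0 <= a <= 1 -> 0 <= p -> 0 <= q -> p + q = 1 ->
  gg a ^+ 2 <= a ^+ 2 * p + (1 - a) ^+ 2 * q.
Proof.
move=> /andP[a0 a1] p0 q0 pq; rewrite /gg.
case: (lerP 1 (2 * a)) => ha; nra.
Qed.

Lemma AR3 (R : realType) (a : R) : 0 <= a <= 1 -> 0 <= gg a /\ gg a - gg a ^+ 2 = a - a * a.
Proof.
move=> /andP[a0 a1]; rewrite /gg; case: (lerP 1 (2 * a)) => ha; split; try lra; ring.
Qed.

Section Main.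
Variable R : realType.
Local Notation C := R[i].
Variable n : nat.
Variable j0 : 'I_n.
Variables P Q : 'M[C]_n.
Hypothesis hP : isp P.
Hypothesis hQ : isp Q.

Let Am := P *m Q *m P.
Let Pc := 1%:M - P.
Let T := Pc *m Q *m P.
Let Cm := P *m Q - Q *m P.

Lemma adA : ad Am = Am.
Proof. by rewrite /Am !ad_mul hP.2 hQ.2 mulmxA. Qed.

Lemma tstarE (M : 'M[C]_n) : (M ^t* )%sesqui = ad M.
Proof. by rewrite /ad map_trmx. Qed.

Lemma Anormal : Am \is normalmx.
Proof. by apply/normalmxP; rewrite tstarE adA. Qed.

Let U := spectralmx Am.
Let D := spectral_diag Am.

Lemma hU1 : U *m ad U = 1%:M.
Proof. by have /unitarymxP := spectral_unitarymx Am; rewrite tstarE. Qed.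
Lemma hU2 : ad U *m U = 1%:M.
Proof. exact: mulmx1C hU1. Qed.

Lemma AE : Am = ad U *m diag_mx D *m U.
Proof.
have /orthomx_spectralP := Anormal.
by rewrite invmx_unitary ?spectral_unitarymx // tstarE.
Qed.

Let x j := ev U j.
Definition lam j := nsq (Q *m P *m x j).

Lemma Ax j : Am *m x j = D 0 j *: x j.
Proof. by rewrite {1}AE dgC_ev // hU1. Qed.

Lemma dot_ev j : dot (x j) (x j) = 1.
Proof. by rewrite -nsqE nsq_ev // hU1. Qed.

Lemma DE j : D 0 j = (lam j)%:C.
Proof.
have : dot (x j) (Am *m x j) = D 0 j by rewrite Ax dotZr dot_ev mulr1.
move=> <-; rewrite /lam nsqE /Am -!mulmxA dot_mul hP.2.
by rewrite -{1}hQ.1 -mulmxA dot_mul hQ.2 !mulmxA.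
Qed.

Lemma AE' : Am = dg U lam.
Proof.
rewrite AE /dg; congr (_ *m diag_mx _ *m _); apply/rowP => j.
by rewrite !mxE DE.
Qed.

Definition h j := lam j - lam j * lam j.

Lemma TT : ad T *m T = dg U h.
Proof.
rewrite /h -dgB -?dg_mul -?AE' ?hU1 //.
rewrite /T !ad_mul (ispC hP).2 hP.2 hQ.2 /Am.
have e1 : Pc *m Pc = Pc := (ispC hP).1.
rewrite !mulmxA -[P *m Q *m Pc *m Pc]mulmxA e1.
rewrite /Pc mulmxBr mulmx1 !mulmxBl.
rewrite -[P *m Q *m Q]mulmxA hQ.1.
by rewrite -[P *m Q *m P *m P]mulmxA hP.1.
Qed.


Let js := [arg max_(j > j0) h j]%O.
Lemma hmax j : h j <= h js.
Proof. by rewrite /js; case: arg_maxP => //= i _ hi; apply: hi. Qed.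
Let M := h js.

Lemma F1 z : nsq (T *m z) <= M * nsq z.
Proof.
have : (nsq (T *m z))%:C = (\sum_j h j * sqj (U *m z) j)%:C.
  by rewrite nsqE dot_mul' mulmxA TT quad.
move/complexI => ->; rewrite -(nsqU hU2 z); apply: quad_le => j; exact: hmax.
Qed.

Lemma F2 j : nsq (T *m x j) = h j.
Proof.
apply: complexI; rewrite nsqE dot_mul' mulmxA TT dg_ev ?hU1 //.
by rewrite dotZr dot_ev mulr1.
Qed.

Lemma h_ge0 j : 0 <= h j.
Proof. by rewrite -F2 nsq_ge0. Qed.

Lemma M_ge0 : 0 <= M.
Proof. exact: h_ge0. Qed.

Lemma F3 y : nsq (ad T *m y) <= M * nsq y.
Proof.
set z := ad T *m y; set N := nsq z.
have dz : dot y (T *m z) = N%:C by rewrite /N nsqE /z dot_mul' ad_ad.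
have dz' : dot (M%:C *: y) (T *m z) = (M * N)%:C by rewrite dotZl dz rmorphM.
have key := nsqB_real dz'.
have k0 := nsq_ge0 (M%:C *: y - T *m z).
rewrite key nsqZ in k0.
have f1 := F1 z; rewrite -/N in f1.
have M0 := M_ge0.
have [Me|Mpos] := eqVneq M 0.
  rewrite Me mul0r in f1 *.
  have e : nsq (T *m z) = 0.
    by apply/le_anti; rewrite nsq_ge0 andbT.
  have : N%:C = (0:R)%:C by rewrite -dz (nsq_eq0 e) dot0r.
  by move/complexI => ->; rewrite mul0r.
have Mp : 0 < M by rewrite lt_def Mpos M0.
have y0 := nsq_ge0 y; have N0 : 0 <= N by apply: nsq_ge0.
rewrite -(ler_pM2l Mp); nra.
Qed.

Lemma TT0 : T *m T = 0.
Proof.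
by rewrite /T !mulmxA -[Pc *m Q *m P *m Pc]mulmxA (isp_orth hP) mulmx0 !mul0mx.
Qed.

Lemma TP : T *m P = T.
Proof. by rewrite /T -mulmxA hP.1. Qed.

Lemma Cdec : Cm = ad T *m Pc - T *m P.
Proof.
rewrite TP /T !ad_mul /Pc (ispC hP).2 hP.2 hQ.2 -!mulmxA (ispC hP).1.
rewrite /Cm mulmxBr mulmx1 mulmxBr mulmxBl mul1mx.
by rewrite opprB addrA subrK.
Qed.

Lemma F4 v : nsq (Cm *m v) = nsq (ad T *m (Pc *m v)) + nsq (T *m (P *m v)).
Proof.
rewrite Cdec mulmxBl -[ad T *m Pc *m v]mulmxA -[T *m P *m v]mulmxA.
rewrite (nsqB_real (r := 0)) ?mulr0 ?subr0 //.
by rewrite dot_mul' ad_ad [T *m (T *m _)]mulmxA TT0 mul0mx dot0r.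
Qed.

Lemma F5 v : nsq (Cm *m v) <= M * nsq v.
Proof.
rewrite F4 (isp_dec v hP) mulrDr addrC.
apply: lerD; [exact: F1 | exact: F3].
Qed.

Lemma F6 : M <= nsq (Cm *m x js).
Proof.
rewrite F4 [T *m (P *m _)]mulmxA TP F2 lerDr; exact: nsq_ge0.
Qed.


Lemma lam01 j : 0 <= lam j <= 1.
Proof.
have h0 := h_ge0 j; have l0 : 0 <= lam j by apply: nsq_ge0.
rewrite /h in h0; apply/andP; split => //; nra.
Qed.

Let ls := lam js.
Let g0 := gg ls.

Lemma Fb Pt : isp Pt -> g0 ^+ 2 <= nsq ((Am - Pt) *m x js).
Proof.
move=> hPt.
set w1 := Pt *m x js; set w2 := (1%:M - Pt) *m x js.
have E : (Am - Pt) *m x js = ls%:C *: w2 - (1 - ls)%:C *: w1.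
  rewrite mulmxBl Ax DE /w2 /w1 mulmxBl mul1mx scalerBr rmorphB rmorph1 /=.
  by rewrite scalerBl scale1r opprB addrA subrK.
have d0 : dot (ls%:C *: w2) ((1 - ls)%:C *: w1) = (0:R)%:C.
  rewrite dotZl dotZr /w2 /w1 dot_mul' (ispC hPt).2 mulmxA (isp_orth' hPt).
  by rewrite mul0mx dot0r !mulr0.
rewrite E (nsqB_real d0) !nsqZ mulr0 subr0.
have := isp_dec (x js) hPt; rewrite nsq_ev ?hU1 // -/w1 -/w2 => e.
apply: AR2 (lam01 js) (nsq_ge0 _) (nsq_ge0 _) _; by rewrite addrC -e.
Qed.

Lemma Fbd Pt v : isp Pt -> nsq v <= 1 -> nsq ((Am - Pt) *m v) <= 2 ^+ 2.
Proof.
move=> hPt hv; rewrite mulmxBl.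
apply: le_trans (nsq_par _ _) _.
have h1 : nsq (Am *m v) <= 1.
  rewrite /Am -!mulmxA; apply: le_trans (isp_le _ hP) _.
  apply: le_trans (isp_le _ hQ) _; apply: le_trans (isp_le _ hP) _; exact: hv.
have h2 : nsq (Pt *m v) <= 1 by apply: le_trans (isp_le _ hPt) hv.
lra.
Qed.

Let e j := ee (lam j).
Let Pt0 := dg U e.

Lemma isp_Pt0 : isp Pt0.
Proof.
split; last by rewrite /Pt0 dg_ad.
rewrite /Pt0 dg_mul ?hU1 //; rewrite /dg; congr (_ *m diag_mx _ *m _).
apply/rowP => j; rewrite !mxE; congr (_%:C).
by rewrite /e /ee; case: ifP; rewrite ?mulr1 ?mulr0.
Qed.

Lemma Fa v : nsq v <= 1 -> nsq ((Am - Pt0) *m v) <= g0 ^+ 2.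
Proof.
move=> hv; rewrite {1}AE' /Pt0 dgB.
set d := fun j => _.
have : (nsq (dg U d *m v))%:C = (\sum_j (d j * d j) * sqj (U *m v) j)%:C.
  by rewrite nsqE dot_mul' dg_ad mulmxA dg_mul ?hU1 // quad.
move/complexI => ->.
apply: le_trans (quad_le (K := g0 ^+ 2) _ _) _.
  move=> j; rewrite /d /e; apply: AR1; rewrite ?lam01 //.
  exact: hmax.
rewrite nsqU ?hU2 //; have := sqr_ge0 g0; nra.
Qed.

Lemma main_pos : opnorm Cm = Num.sqrt M /\ inf [set opnorm (Am - Pt) | Pt in [set Pt | is_proj Pt]]%classic = g0 /\ g0 - g0 ^+ 2 = M.
Proof.
have [g00 gM] := AR3 (lam01 js).
have xn : nsq (x js) <= 1 by rewrite nsq_ev ?hU1.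
have c1 : forall v, nsq v <= 1 -> nsq (Cm *m v) <= M.
  by move=> v hv; apply: le_trans (F5 v) _; rewrite ler_piMr ?M_ge0.
have c2 : exists v, nsq v <= 1 /\ M <= nsq (Cm *m v) by exists (x js); split => //; exact: F6.
have c3 : forall Pt, isp Pt -> exists v, nsq v <= 1 /\ g0 ^+ 2 <= nsq ((Am - Pt) *m v).
  by move=> Pt hPt; exists (x js); split => //; exact: Fb.
have c4 : exists Pt, isp Pt /\ forall v, nsq v <= 1 -> nsq ((Am - Pt) *m v) <= g0 ^+ 2.
  by exists Pt0; split; [exact: isp_Pt0 | exact: Fa].
have [h1 h2] := final g00 gM c1 c2 c3 (fun Pt hPt v => @Fbd Pt v hPt) c4.
by split.
Qed.

End Main.

Local Close Scope complex_scope.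

Theorem lemma7 (R : realType) (n : nat) (P Q : 'M[R[i]]_n) :
  is_proj P -> is_proj Q ->
  opnorm (commutator P Q) = Num.sqrt (fPQ P Q - fPQ P Q ^+ 2).
Proof.
move=> hP hQ.
case: n P Q hP hQ => [|n'] P Q hP hQ; last first.
  have [h1 [h2 h3]] := main_pos (ord0 : 'I_n'.+1) hP hQ.
  by rewrite /fPQ /commutator h1 h2 h3.
have z : forall v : 'cV[R[i]]_0, nsq v = 0 by move=> v; rewrite /nsq big_ord0.
have i0 : isp (0 : 'M[R[i]]_0) by split; apply/matrixP => [[]].
have [h1 h2] : opnorm (P *m Q - Q *m P) = Num.sqrt 0 /\
   inf [set opnorm (P *m Q *m P - Pt) | Pt in [set Pt | is_proj Pt]]%classic = 0.
  apply: final; rewrite ?lexx ?expr0n /= ?subr0 //.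
  - by move=> v _; rewrite z; apply: lexx.
  - by exists 0; split; rewrite z ?ler01 //; apply: lexx.
  - by move=> Pt _; exists 0; split; rewrite z ?ler01 ?expr0n //; apply: lexx.
  - by move=> Pt _ v _; rewrite z sqr_ge0.
  - by exists 0; split => // v _; rewrite z; apply: lexx.
by rewrite /fPQ /commutator h1 h2 expr0n /= subr0.
Qed.
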